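(* Let $T>0$ with $T/\pi\in\mathbb Q$. Let $u:\mathbb R\to L^2_{r,0}$, $u(t)=\mathcal S(t)u_0$, be a solution of the Benjamin–Ono equation with $u_0\in L^2_{r,0}$, and assume $u$ is $T$-periodic, i.e. $u(t+T)=u(t)$ for all $t\in\mathbb R$. Then $u_0$ is a finite gap potential, i.e. there is $N\ge1$ with $\zeta_n(u_0)=0$ for all $n>N$.
   Context: $\mathbb T=\mathbb R/2\pi\mathbb Z$. For $s\in\mathbb R$, $H^s_{r,0}$ is the Sobolev space of real-valued distributions $u$ on $\mathbb T$ with $H^s$-regularity and zero mean ($\hat u(0)=0$); $L^2_{r,0}=H^0_{r,0}$. The Benjamin–Ono (BO) equation is $\partial_tu=H\partial_x^2u-\partial_x(u^2)$, where $H$ is the Hilbert transform, the Fourier multiplier $\hat f(n)\mapsto -i\,\mathrm{sign}(n)\hat f(n)$ (with $0$ at $n=0$). For $\sigma\in\mathbb R$, $h^\sigma_+$ is the space of complex sequences $(z_n)_{n\ge1}$ with $\sum_{n\ge1}n^{2\sigma}|z_n|^2<\infty$. The following known facts are taken as given: for every $s>-1/2$ the BO equation is globally well posed in $H^s_{r,0}$ with continuous solution map $\mathcal S(t)$; there is a map $\Phi:u\mapsto(\zeta_n(u))_{n\ge1}$ (Birkhoff coordinates) which for every $s>-1/2$ is a homeomorphism $H^s_{r,0}\to h^{s+1/2}_+$ (in particular $u\in H^s_{r,0}$ iff $\Phi(u)\in h_+^{s+1/2}$), and for all $u\in H^s_{r,0}$, $n\ge1$, $t\in\mathbb R$, $\zeta_n(\mathcal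 S(t)u)=e^{i\omega_nt}\zeta_n(u)$ with $\omega_n=n^2-2\sum_{k=1}^nk|\zeta_k(u)|^2-2n\sum_{k>n}|\zeta_k(u)|^2$. *)

(* Defs.v *)
From Stdlib Require Import Reals ZArith.
From Coquelicot Require Import Coquelicot.
Open Scope R_scope.

(* A real-valued zero-mean distribution on T = R/2piZ is identified with its
   Fourier coefficient sequence c : Z -> C.  u is in L^2_{r,0} iff
   c 0 = 0 (zero mean), c (-n) = conj (c n) (real-valued), and
   sum_n |c n|^2 < oo (by the symmetry it suffices to sum over n >= 0). *)
Definition L2r0 (c : Z -> C) : Prop :=
  c 0%Z = 0%C /\
  (forall n : Z, c (- n)%Z = Cconj (c n)) /\
  ex_series (fun n : nat => (Cmod (c (Z.of_nat n))) ^ 2).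

(* h^sigma_+ : sequences (z_n)_{n>=1} (here z : nat -> C, the value z 0 is
   irrelevant) with sum_{n>=1} n^(2 sigma) |z_n|^2 < oo. *)
Definition h_plus (sigma : R) (z : nat -> C) : Prop :=
  ex_series (fun n : nat => Rpower (INR (S n)) (2 * sigma) * (Cmod (z (S n))) ^ 2).

Definition bo_omega (z : nat -> C) (n : nat) : R :=
  (INR n) ^ 2
  - 2 * sum_n (fun k => INR k * (Cmod (z k)) ^ 2) n
  - 2 * INR n * Series (fun j : nat => (Cmod (z (S (n + j)))) ^ 2).

Definition cis (x : R) : C := (cos x, sin x).

(* Main.v *)
Require Import Defs.
From Stdlib Require Import Reals ZArith Lra Lia Wf_nat Classical.
From Coquelicot Require Import Coquelicot.
Open Scope R_scope.

Definition Rt (z : nat -> C) (j : nat) : R :=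
  Series (fun i : nat => (Cmod (z (S (j + i)))) ^ 2).

Lemma series_nonneg (b : nat -> R) : (forall n, 0 <= b n) -> ex_series b -> 0 <= Series b.
Proof.
  intros Hb He.
  assert (H := Series_le (fun n => 0 * b n) b).
  rewrite Series_scal_l, Rmult_0_l in H. apply H; auto.
  intros n; split; [lra| specialize (Hb n); lra].
Qed.

Section Aux.
Variable z : nat -> C.
Hypothesis Hc : ex_series (fun n => INR (S n) * Cmod (z (S n)) ^ 2).

Lemma ex_a_shift (j : nat) : ex_series (fun i => Cmod (z (S (j + i))) ^ 2).
Proof.
  assert (H : ex_series (fun i => Cmod (z (S i)) ^ 2)).
  { apply (@ex_series_le R_AbsRing R_CompleteNormedModule _ (fun n => INR (S n) * Cmod (z (S n)) ^ 2)); auto.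
    intros n. change (norm (Cmod (z (S n)) ^ 2)) with (Rabs (Cmod (z (S n)) ^ 2)).
    rewrite Rabs_pos_eq by (apply pow2_ge_0).
    assert (1 <= INR (S n)) by (rewrite S_INR; pose proof (pos_INR n); lra).
    pose proof (pow2_ge_0 (Cmod (z (S n)))). nra. }
  apply (ex_series_incr_n _ j) in H. exact H.
Qed.

Lemma Rt_step (j : nat) : Rt z j = Cmod (z (S j)) ^ 2 + Rt z (S j).
Proof.
  unfold Rt. rewrite Series_incr_1 by apply ex_a_shift.
  rewrite Nat.add_0_r. f_equal. apply Series_ext. intros k.
  f_equal. f_equal. f_equal. lia.
Qed.

Lemma omega_step (j : nat) :
  bo_omega z (S j) = bo_omega z j + 2 * INR j + 1 - 2 * Rt z j.
Proof.
  rewrite (Rt_step j). unfold bo_omega. change (Series (fun j0 : nat => Cmod (z (S (S j + j0))) ^ 2)) with (Rt z (S j)).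
  change (Series (fun j0 : nat => Cmod (z (S (j + j0))) ^ 2)) with (Rt z j).
  rewrite (Rt_step j).
  rewrite sum_Sn. change plus with Rplus. rewrite S_INR. ring.
Qed.

Lemma Rt_nonneg (j : nat) : 0 <= Rt z j.
Proof.
  apply series_nonneg; [intros; apply pow2_ge_0 | apply ex_a_shift].
Qed.

Lemma tail_small (eps : R) : 0 < eps ->
  exists M, forall m, (M <= m)%nat -> Series (fun j => INR (S (m + j)) * Cmod (z (S (m + j))) ^ 2) < eps.
Proof.
  intros He.
  pose (c := fun n => INR (S n) * Cmod (z (S n)) ^ 2).
  assert (Hs := Series_correct c Hc).
  apply is_series_Reals in Hs.
  destruct (Hs eps He) as [N HN].
  exists (S N). intros m Hm.
  specialize (HN (pred m) ltac:(lia)).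
  unfold R_dist in HN.
  change (Series (fun j => INR (S (m + j)) * Cmod (z (S (m + j))) ^ 2)) with (Series (fun k => c (m + k)%nat)).
  rewrite (Series_incr_n c m) in HN by (auto; lia).
  apply Rabs_def2 in HN. lra.
Qed.

Lemma upper_bound (m' : nat) :
  INR (S m') * Rt z m' <= Series (fun j => INR (S (m' + j)) * Cmod (z (S (m' + j))) ^ 2).
Proof.
  assert (Hex : ex_series (fun j => INR (S (m' + j)) * Cmod (z (S (m' + j))) ^ 2)).
  { apply (ex_series_incr_n (fun n => INR (S n) * Cmod (z (S n)) ^ 2) m') in Hc. exact Hc. }
  rewrite Series_incr_1 by exact Hex. rewrite Nat.add_0_r.
  rewrite Rt_step, Rmult_plus_distr_l. apply Rplus_le_compat_l.
  unfold Rt. rewrite <- Series_scal_l. apply Series_le.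
  - intros n. rewrite (Nat.add_succ_r m' n). split.
    + apply Rmult_le_pos; [apply pos_INR | apply pow2_ge_0].
    + apply Rmult_le_compat_r; [apply pow2_ge_0|]. apply le_INR. lia.
  - apply ex_series_incr_1 in Hex. exact Hex.
Qed.
End Aux.

Theorem theorem3p1
  (* the BO solution map S(t) on L^2_{r,0} (Fourier-coefficient model) *)
  (Sflow : R -> (Z -> C) -> (Z -> C))
  (* the Birkhoff map Phi : u |-> (zeta_n(u))_{n>=1} *)
  (zeta : (Z -> C) -> nat -> C)
  (HS : forall (t : R) (u : Z -> C), L2r0 u -> L2r0 (Sflow t u))
  (Hzeta_range : forall u, L2r0 u -> h_plus (1 / 2) (zeta u))
  (Hzeta_inj : forall u v, L2r0 u -> L2r0 v ->
      (forall n : nat, (1 <= n)%nat -> zeta u n = zeta v n) -> u = v)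
  (Hzeta_surj : forall z : nat -> C, h_plus (1 / 2) z ->
      exists u, L2r0 u /\ forall n : nat, (1 <= n)%nat -> zeta u n = z n)
  (Hphase : forall (u : Z -> C) (n : nat) (t : R), L2r0 u -> (1 <= n)%nat ->
      zeta (Sflow t u) n = Cmult (cis (bo_omega (zeta u) n * t)) (zeta u n))
  (T : R) (HT : 0 < T)
  (HTrat : exists (p q : Z), q <> 0%Z /\ T / PI = IZR p / IZR q)
  (u0 : Z -> C) (Hu0 : L2r0 u0)
  (Hper : forall t : R, Sflow (t + T) u0 = Sflow t u0) :
  exists N : nat, (1 <= N)%nat /\
    forall n : nat, (N < n)%nat -> zeta u0 n = 0%C.
Proof.
  destruct HTrat as [p [q [Hq HTpq]]].
  set (z := zeta u0).
  assert (Hc : ex_series (fun n => INR (S n) * Cmod (z (S n)) ^ 2)).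
  { assert (H := Hzeta_range u0 Hu0). unfold h_plus in H.
    eapply ex_series_ext; [|exact H]. intros n.
    replace (2 * (1/2)) with 1 by field. rewrite Rpower_1; [reflexivity|].
    apply lt_0_INR; lia. }
  assert (Hk : forall n, (1 <= n)%nat -> z n <> 0%C ->
             exists k : Z, bo_omega z n * T = IZR k * PI).
  { intros n Hn Hzn.
    assert (E := f_equal (fun u => zeta u n) (Hper 0)). simpl in E.
    rewrite Rplus_0_l in E. rewrite !Hphase in E by auto.
    rewrite Rmult_0_r in E.
    replace (cis 0) with (RtoC 1) in E by (unfold cis; rewrite cos_0, sin_0; reflexivity).
    rewrite Cmult_1_l in E.
    fold z in E.
    assert (E2 : cis (bo_omega z n * T) = RtoC 1).
    { transitivity (cis (bo_omega z n * T) * (z n * / z n))%C.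
      { rewrite Cinv_r by exact Hzn. now rewrite Cmult_1_r. }
      rewrite Cmult_assoc, E. apply Cinv_r; exact Hzn. }
    apply (f_equal snd) in E2. simpl in E2. apply sin_eq_0_0. exact E2. }
  apply NNPP. intros Hnot.
  assert (Hinf : forall N, exists n, (N < n)%nat /\ z n <> 0%C).
  { intros N. apply NNPP. intros H2. apply Hnot. exists (S N). split; [lia|].
    intros n Hn. apply NNPP. intros H3. apply H2. exists n. split; [lia | exact H3]. }
  assert (Hp : p <> 0%Z).
  { intros ->. rewrite Rdiv_0_l in HTpq.
    assert (0 < T / PI) by (apply Rdiv_lt_0_compat; [lra | apply PI_RGT_0]). lra. }
  assert (Hpa : 1 <= Rabs (IZR p)).
  { rewrite <- abs_IZR. apply IZR_le. lia. }
  destruct (tail_small z Hc (1 / (2 * Rabs (IZR p)))) as [M HM].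
  { apply Rdiv_lt_0_compat; lra. }
  destruct (Hinf M) as [n [HnM Hzn]].
  destruct (dec_inh_nat_subset_has_unique_least_element (fun k => (n < k)%nat /\ z k <> 0%C))
    as [m [[[Hnm Hzm] Hmin] _]].
  { intros k. apply classic. }
  { apply Hinf. }
  destruct m as [|m']; [lia|].
  set (D := Rt z m').
  assert (Hzero : forall k, (n < k)%nat -> (k < S m')%nat -> z k = 0%C).
  { intros k H1 H2. apply NNPP. intros H3. specialize (Hmin k (conj H1 H3)). lia. }
  assert (Hconst : forall kk j, (j + kk = m')%nat -> (n <= j)%nat -> Rt z j = D).
  { induction kk as [|kk IH]; intros j Hj Hnj.
    - unfold D. f_equal. lia.
    - rewrite (Rt_step z Hc j). rewrite (IH (S j)) by lia.
      rewrite (Hzero (S j)) by lia. rewrite Cmod_0. ring. }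
  assert (Hom : forall i, (n + i <= S m')%nat ->
     bo_omega z (n + i) = bo_omega z n + INR (n + i) ^ 2 - INR n ^ 2 - 2 * INR i * D).
  { induction i as [|i IH]; intros Hi.
    - rewrite Nat.add_0_r. simpl. ring.
    - rewrite Nat.add_succ_r, omega_step by exact Hc.
      rewrite IH by lia. rewrite (Hconst (m' - (n + i))%nat (n + i)%nat) by lia.
      rewrite !S_INR, !plus_INR. ring. }
  assert (HDpos : 0 < D).
  { unfold D. rewrite (Rt_step z Hc m').
    pose proof (Rt_nonneg z Hc (S m')).
    assert (0 < Cmod (z (S m'))) by (apply Cmod_gt_0; exact Hzm).
    pose proof (pow_lt _ 2 H0). lra. }
  set (i := (S m' - n)%nat).
  assert (Hmi : S m' = (n + i)%nat) by (unfold i; lia).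
  assert (Hi1 : 1 <= INR i) by (apply (le_INR 1); unfold i; lia).
  destruct (Hk (S m') ltac:(lia) Hzm) as [k1 Hk1].
  destruct (Hk n ltac:(lia) Hzn) as [k2 Hk2].
  assert (HT2 : T = PI * IZR p / IZR q).
  { apply (f_equal (fun x => x * PI)) in HTpq. field_simplify in HTpq.
    - rewrite HTpq. field. apply not_0_IZR; auto.
    - apply not_0_IZR; auto.
    - pose proof PI_RGT_0; lra. }
  pose (K := (p * (Z.of_nat (S m') * Z.of_nat (S m') - Z.of_nat n * Z.of_nat n) - (k1 - k2) * q)%Z).
  assert (HK : 2 * IZR p * INR i * D = IZR K).
  { unfold K. rewrite minus_IZR, !mult_IZR, minus_IZR, minus_IZR, !mult_IZR.
    rewrite <- !INR_IZR_INZ.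
    assert (E : bo_omega z (S m') * T - bo_omega z n * T = (IZR k1 - IZR k2) * PI) by (rewrite Hk1, Hk2; ring).
    rewrite Hmi in E. rewrite Hom in E by lia. rewrite <- Hmi in E.
    rewrite HT2 in E. assert (Hq' : IZR q <> 0) by (apply not_0_IZR; auto).
    pose proof PI_RGT_0.
    apply (f_equal (fun x => x * IZR q / PI)) in E. field_simplify in E; try lra.
    assert (E' : INR (S m') ^ 2 * IZR p - INR n ^ 2 * IZR p - 2 * INR i * D * IZR p = IZR q * IZR k1 - IZR q * IZR k2)
      by (rewrite <- E; field; lra).
    lra. }
  assert (HK0 : K <> 0%Z).
  { intros H0. rewrite H0 in HK. simpl in HK.
    assert (IZR p <> 0) by (apply not_0_IZR; auto).
    assert (0 < INR i * D) by (apply Rmult_lt_0_compat; lra).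
    assert (2 * IZR p * (INR i * D) <> 0).
    { apply Rmult_integral_contrapositive. split; [lra|lra]. }
    match goal with Hx : 2 * IZR p * (INR i * D) <> 0 |- _ => apply Hx end. rewrite <- HK. ring. }
  assert (HK1 : 1 <= Rabs (IZR K)) by (rewrite <- abs_IZR; apply IZR_le; lia).
  rewrite <- HK in HK1.
  replace (2 * IZR p * INR i * D) with (IZR p * (2 * INR i * D)) in HK1 by ring.
  rewrite Rabs_mult, (Rabs_pos_eq (2 * INR i * D)) in HK1
    by (apply Rmult_le_pos; lra).
  assert (Hup := upper_bound z Hc m').
  specialize (HM m' ltac:(lia)).
  fold D in Hup.
  assert (INR i <= INR (S m')) by (apply le_INR; unfold i; lia).
  assert (INR i * D <= INR (S m') * D) by (apply Rmult_le_compat_r; lra).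
  assert (Hlt : INR i * D < 1 / (2 * Rabs (IZR p))) by lra.
  apply (Rmult_lt_compat_l (2 * Rabs (IZR p))) in Hlt; [|lra].
  replace (2 * Rabs (IZR p) * (1 / (2 * Rabs (IZR p)))) with 1 in Hlt by (field; lra).
  lra.
Qed.
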